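(* For all integers $n\geq1$, $$\sum_{k=1}^{n}t^{2(n-k)}\left(\frac{\{k+1\}_{s,t}+t\{k-1\}_{s,t}}{s}\right)\{k\}_{s,t}^3=\left\{{n+1\atop 2}\right\}_{s,t}^2=\left(\sum_{k=1}^{n}\varphi^{2(n-k)}\varphi'^{\,k-1}\{k\}_{s,t}\right)^2.$$
   Context: Let $s,t$ be nonzero reals with $s^2+4t\neq0$; $\varphi=\frac{s+\sqrt{s^2+4t}}{2}$, $\varphi'=\frac{s-\sqrt{s^2+4t}}{2}$. Generalized Fibonacci polynomials: $\{0\}_{s,t}=0$, $\{1\}_{s,t}=1$, $\{n+2\}_{s,t}=s\{n+1\}_{s,t}+t\{n\}_{s,t}$ (so $\{n\}_{s,t}=\frac{\varphi^n-\varphi'^n}{\varphi-\varphi'}$). The generalized triangular numbers are $\left\{{n+1\atop 2}\right\}_{s,t}=\frac{\{n\}_{s,t}\{n+1\}_{s,t}}{s}$. *)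

(* Defs.v *)
From mathcomp Require Import all_boot all_order all_algebra.
From mathcomp Require Import complex.
Set Implicit Arguments. Unset Strict Implicit. Unset Printing Implicit Defensive.
Import Order.TTheory GRing.Theory Num.Theory.
Local Open Scope ring_scope.
Local Open Scope complex_scope.

Fixpoint gfib_aux (R : nzRingType) (s t : R) (n : nat) : R * R :=
  match n with
  | 0 => (0, 1)
  | m.+1 => let p := gfib_aux s t m in (p.2, s * p.2 + t * p.1)
  end.
Definition gfib (R : nzRingType) (s t : R) (n : nat) : R := (gfib_aux s t n).1.

Lemma gfib0 (R : nzRingType) (s t : R) : gfib s t 0 = 0. Proof. by []. Qed.
Lemma gfib1 (R : nzRingType) (s t : R) : gfib s t 1 = 1. Proof. by []. Qed.
Lemma gfibSS (R : nzRingType) (s t : R) n :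
  gfib s t n.+2 = s * gfib s t n.+1 + t * gfib s t n.
Proof. by []. Qed.

(* generalized triangular number {n+1 choose 2}_{s,t} = {n}{n+1}/s *)
Definition gtri (R : fieldType) (s t : R) (n : nat) : R :=
  gfib s t n * gfib s t n.+1 / s.

(* phi and phi' as elements of R[i] (the discriminant may be negative) *)
Definition gphi (R : rcfType) (s t : R) : R[i] :=
  ((s%:C) + sqrtC ((s ^+ 2 + 4 * t)%:C)) / 2.
Definition gphi' (R : rcfType) (s t : R) : R[i] :=
  ((s%:C) - sqrtC ((s ^+ 2 + 4 * t)%:C)) / 2.

(* Main.v *)
Require Import Defs.
From mathcomp Require Import all_boot all_order all_algebra.
From mathcomp Require Import complex ring.
Import Order.TTheory GRing.Theory Num.Theory.
Local Open Scope ring_scope.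
Local Open Scope complex_scope.

Lemma key (F : fieldType) (s t p q : F) n : p + q = s -> p*q = -t ->
  gfib s t n.+2 - p^+2 * gfib s t n = s * q^+n.
Proof.
move=> hs hp.
have ht : t = -(p*q) by rewrite hp opprK.
have hp2 : p ^+ 2 = p * s + t by rewrite -hs ht; ring.
have hq2 : q ^+ 2 = q * s + t by rewrite -hs ht; ring.
suff: (gfib s t n.+2 - p^+2 * gfib s t n = s * q^+n) /\
      (gfib s t n.+3 - p^+2 * gfib s t n.+1 = s * q^+n.+1) by case.
elim: n => [|n [IH1 IH2]].
  rewrite !gfibSS gfib1 gfib0 hp2 -hs; split; ring.
split=> //.
have e : q ^+ n.+2 = s * q ^+ n.+1 + t * q ^+ n by rewrite !exprS mulrA -expr2 hq2; ring.
have E2 : gfib s t n.+3 = s * q ^+ n.+1 + p^+2 * gfib s t n.+1 by rewrite -IH2; ring.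
have -> : gfib s t n.+4 = s * gfib s t n.+3 + t * gfib s t n.+2 by [].
rewrite E2 e.
have -> : s * (s * q ^+ n.+1 + t * q ^+ n) = s * (s * q ^+ n.+1) + t * (s * q ^+ n) by ring.
rewrite -IH1.
have -> : gfib s t n.+2 = s * gfib s t n.+1 + t * gfib s t n by [].
ring.
Qed.

Lemma part2 (F : fieldType) (s t p q : F) n : s != 0 -> p + q = s -> p*q = -t ->
  \sum_(1 <= k < n.+1) p ^+ (2 * (n - k)) * q ^+ k.-1 * gfib s t k = gtri s t n.
Proof.
move=> s0 hs hp; elim: n => [|n IH].
  by rewrite big_geq // /gtri gfib0 !mul0r.
rewrite big_nat_recr //=.
rewrite (eq_big_nat _ _ (F2 := fun k => p^+2 * (p ^+ (2 * (n - k)) * q ^+ k.-1 * gfib s t k))); last first.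
  move=> k /andP [h1 h2]; rewrite subSn // mulnS exprD; ring.
rewrite -big_distrr /= IH subnn muln0 expr0 mul1r.
have h := @key _ s t p q n hs hp.
rewrite /gtri.
have -> : gfib s t n.+2 = s * q ^+ n + p^+2 * gfib s t n by rewrite -h; ring.
field; exact s0.
Qed.

Lemma part1 (F : fieldType) (s t : F) n : s != 0 ->
  \sum_(1 <= k < n.+1)
      t ^+ (2 * (n - k)) * ((gfib s t k.+1 + t * gfib s t k.-1) / s)
      * gfib s t k ^+ 3 = gtri s t n ^+ 2.
Proof.
move=> s0; elim: n => [|n IH].
  by rewrite big_geq // /gtri gfib0 !mul0r expr0n.
rewrite big_nat_recr //=.
rewrite (eq_big_nat _ _ (F2 := fun k => t^+2 * (t ^+ (2 * (n - k)) * ((gfib s t k.+1 + t * gfib s t k.-1) / s)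
      * gfib s t k ^+ 3))); last first.
  move=> k /andP [h1 h2]; rewrite subSn // mulnS exprD; ring.
rewrite -big_distrr /= IH subnn muln0 expr0 mul1r /gtri.
have -> : gfib s t n.+2 = s * gfib s t n.+1 + t * gfib s t n by [].
field; exact s0.
Qed.

Lemma fibC (R : rcfType) (s t : R) n : (gfib s t n)%:C = gfib s%:C t%:C n.
Proof.
suff: (gfib s t n)%:C = gfib s%:C t%:C n /\ (gfib s t n.+1)%:C = gfib s%:C t%:C n.+1 by case.
elim: n => [|n [IH1 IH2]]; first by split.
split=> //.
by rewrite !gfibSS rmorphD !rmorphM -IH1 -IH2.
Qed.

Theorem mainTheorem13 (R : rcfType) (s t : R) (n : nat) :
  s != 0 -> t != 0 -> s ^+ 2 + 4 * t != 0 -> (1 <= n)%N ->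
  (\sum_(1 <= k < n.+1)
      t ^+ (2 * (n - k)) * ((gfib s t k.+1 + t * gfib s t k.-1) / s)
      * gfib s t k ^+ 3 = gtri s t n ^+ 2)
  /\
  ((gtri s t n ^+ 2)%:C =
     (\sum_(1 <= k < n.+1)
        gphi s t ^+ (2 * (n - k)) * gphi' s t ^+ k.-1 * (gfib s t k)%:C) ^+ 2).
Proof.
move=> s0 t0 d0 n1; split; first exact: part1.
have sC0 : s%:C != 0 by rewrite (inj_eq (@complexI R)).
have hs : gphi s t + gphi' s t = s%:C.
  rewrite /gphi /gphi'; field; rewrite ?pnatr_eq0 //.
have hp : gphi s t * gphi' s t = - t%:C.
  rewrite /gphi /gphi'.
  have e : sqrtC ((s ^+ 2 + 4 * t)%:C) ^+ 2 = (s ^+ 2 + 4 * t)%:C by rewrite sqrtCK.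
  set r := sqrtC _ in e *.
  have -> : (s%:C + r) / 2 * ((s%:C - r) / 2) = (s%:C ^+ 2 - r ^+ 2) / 4 by field; rewrite ?pnatr_eq0 //.
  rewrite e.
  have -> : (s ^+ 2 + 4 * t)%:C = s%:C ^+ 2 + 4 * t%:C.
    by rewrite rmorphD !rmorphM rmorph_nat expr2.
  field; rewrite ?pnatr_eq0 //.
rewrite (eq_big_nat _ _ (F2 := fun k => gphi s t ^+ (2 * (n - k)) * gphi' s t ^+ k.-1 * gfib s%:C t%:C k)); last by move=> k _; rewrite fibC.
rewrite (@part2 _ _ _ _ _ n sC0 hs hp) rmorphXn; congr (_ ^+ 2).
rewrite /gtri -!fibC !rmorphM fmorphV.
reflexivity.
Qed.
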